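(* Let $s\ge1$, let $f_1,\dots,f_s\in\mathfrak{M}\setminus\{0\}$, and let $Z=\{z_1,\dots,z_s\}$ be a set of $s$ distinct indeterminates in $X$. The following are equivalent: (a) The tuple $(f_1,\dots,f_s)$ is coherently $Z$-separating. (b) For every term ordering $\sigma$ with $z_i=\mathrm{LT}_\sigma(f_i)$ for $i=1,\dots,s$, the reduced $\sigma$-Gröbner basis of $\langle f_1,\dots,f_s\rangle$ is $\{\frac1{c_1}f_1,\dots,\frac1{c_s}f_s\}$, where $c_i=\mathrm{LC}_\sigma(f_i)$. (c) For every proper ideal $I$ of $P$ containing $f_1,\dots,f_s$ and every term ordering $\sigma$ with $z_i=\mathrm{LT}_\sigma(f_i)$ for $i=1,\dots,s$, the ideal $I$ has a $\sigma$-Gröbner basis of the form $\{\frac1{c_1}f_1,\dots,\frac1{c_s}f_s,g_1,\dots,g_t\}$, where $c_i=\mathrm{LC}_\sigma(f_i)$, where $\{\frac1{c_1}f_1,\dots,\frac1{c_s}f_s\}$ is the reduced $\sigma$-Gröbner basis of $\langle f_1,\dots,f_s\rangle$, and where $\{g_1,\dots,g_t\}$ is the reduced $\hat\sigma$-Gröbner basis of $I\cap\widehat P$.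
   Context: $K$ is a field, $P=K[x_1,\dots,x_n]$, $X=\{x_1,\dots,x_n\}$, $\mathfrak{M}=\langle x_1,\dots,x_n\rangle$. For $Z\subseteq X$, $\widehat P=K[X\setminus Z]$, and for a term ordering $\sigma$ on $P$, $\hat\sigma$ denotes its restriction to $\widehat P$. For $f\in P$, $\mathrm{indets}(f)$ is the set of indeterminates dividing at least one term in the support of $f$. For $f\in\mathfrak{M}$, $\mathrm{Lin}_{\mathfrak{M}}(f)$ is the homogeneous degree-one part of $f$. If $\mathrm{Lin}_{\mathfrak{M}}(f)\neq0$, $z\in\mathrm{indets}(\mathrm{Lin}_{\mathfrak{M}}(f))$ and $c\ne0$ is the coefficient of $z$ in $f$, the $z$-tail of $f$ is $\mathrm{tail}_z(f)=z-\frac1c f$; $f$ is called $z$-separating if $z\notin\mathrm{indets}(\mathrm{tail}_z(f))$. A tuple $(f_1,\dots,f_s)$ of nonzero elements of $\mathfrak{M}$ is coherently $Z$-separating, for $Z=\{z_1,\dots,z_s\}$ distinct indeterminates, if for every $i$: $f_i$ is $z_i$-separating, and $z_i\notin\mathrm{indets}(f_j)$ for all $j\ne i$.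
   Formalization: Conditions (b) and (c) each also assert that some term ordering σ with $z_i=\mathrm{LT}_\sigma(f_i)$ for i=1,…,s exists, in addition to the clause for every such σ. The statement above fails without it. *)

(* Defs.v *)
From HB Require Import structures.
From mathcomp Require Import all_boot all_order all_algebra.
From mathcomp Require Export mpoly.

Set Implicit Arguments.
Unset Strict Implicit.
Unset Printing Implicit Defensive.

Import Order.TTheory GRing.Theory.
Local Open Scope ring_scope.

Section Defs.
Variables (K : fieldType) (n : nat).
Local Notation P := {mpoly K[n]}.
Local Notation mon := 'X_{1..n}.

Definition term_ordering (le : rel mon) : Prop :=
  [/\ reflexive le, antisymmetric le, transitive le & total le] /\
  (forall m1 m2 m : mon, le m1 m2 -> le (m1 + m)%MM (m2 + m)%MM) /\
  (forall m : mon, le 0%MM m).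

(* Leading term LT_sigma(f): the sigma-largest term in the support of f
   (for f = 0 this is the default value 1 = 0%MM). *)
Definition LT (le : rel mon) (f : P) : mon :=
  foldr (fun m acc => if le acc m then m else acc) 0%MM (msupp f).

Definition LC (le : rel mon) (f : P) : K := f@_(LT le f).

(* The maximal ideal M = <x_1,...,x_n>: polynomials with zero constant term. *)
Definition in_M (f : P) : Prop := f@_0%MM = 0.

Definition indets (f : P) (i : 'I_n) : Prop :=
  exists2 m, m \in msupp f & (0 < m i)%N.

Definition Lin (f : P) : P := \sum_(i < n) f@_(U_(i))%MM *: 'X_i.

Definition ztail (z : 'I_n) (f : P) : P := 'X_z - (f@_(U_(z))%MM)^-1 *: f.

Definition separating (z : 'I_n) (f : P) : Prop :=
  [/\ Lin f != 0, indets (Lin f) z & ~ indets (ztail z f) z].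

Definition coherently_separating (s : nat) (z : 'I_s -> 'I_n)
  (f : 'I_s -> P) : Prop :=
  forall i : 'I_s, separating (z i) (f i) /\
     (forall j : 'I_s, j != i -> ~ indets (f j) (z i)).

Definition is_ideal (I : P -> Prop) : Prop :=
  [/\ I 0, (forall f g, I f -> I g -> I (f + g))
    & (forall h f, I f -> I (h * f))].

Definition is_proper_ideal (I : P -> Prop) : Prop := is_ideal I /\ ~ I 1.

Definition ideal_gen (s : nat) (f : 'I_s -> P) (p : P) : Prop :=
  exists h : 'I_s -> P, p = \sum_(i < s) h i * f i.

(* The subring Phat = K[X \ Z], and I cap Phat. *)
Definition in_Phat (s : nat) (z : 'I_s -> 'I_n) (p : P) : Prop :=
  forall i : 'I_s, ~ indets p (z i).

Definition restrict_Phat (s : nat) (z : 'I_s -> 'I_n) (I : P -> Prop) (p : P)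
  : Prop := I p /\ in_Phat z p.

Definition is_GB (le : rel mon) (I : P -> Prop) (G : seq P) : Prop :=
  (forall g, g \in G -> I g /\ g != 0) /\
  (forall p, I p -> p != 0 -> exists2 g, g \in G & (LT le g <= LT le p)%MM).

(* G is the reduced sigma-Groebner basis of I (as a set: no repetitions). *)
Definition is_reduced_GB (le : rel mon) (I : P -> Prop) (G : seq P) : Prop :=
  [/\ is_GB le I G, uniq G,
      (forall g, g \in G -> LC le g = 1)
    & (forall g g', g \in G -> g' \in G -> g' != g ->
         forall m, m \in msupp g -> ~~ (LT le g' <= m)%MM)].

End Defs.

(* Main.v *)
Require Import Defs.
From HB Require Import structures.
From mathcomp Require Import all_boot all_order all_algebra.
From mathcomp Require Import mpoly.
From Stdlib Require Import Classical.
Import Order.TTheory GRing.Theory.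
Local Open Scope ring_scope.

Set Implicit Arguments.
Unset Strict Implicit.
Unset Printing Implicit Defensive.

Section Ord.
Variables (n : nat) (le : rel 'X_{1..n}).
Hypothesis Hle : term_ordering le.

Lemma tle_refl m : le m m.
Proof. by case: Hle => -[? _ _ _] _. Qed.
Lemma tle_anti a b : le a b -> le b a -> a = b.
Proof. by case: Hle => -[_ H _ _] _ h1 h2; apply: H; rewrite h1 h2. Qed.
Lemma tle_trans a b c : le a b -> le b c -> le a c.
Proof. by case: Hle => -[_ _ H _] _ h1 h2; apply: H h1 h2. Qed.
Lemma tle_total a b : le a b || le b a.
Proof. by case: Hle => -[_ _ _ H] _; apply: H. Qed.
Lemma tle_addr a b m : le a b -> le (a + m)%MM (b + m)%MM.
Proof. by case: Hle => _ [H _]; apply: H. Qed.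
Lemma tle_addl a b m : le a b -> le (m + a)%MM (m + b)%MM.
Proof. by rewrite ![(m + _)%MM]addmC; apply: tle_addr. Qed.
Lemma tle0 m : le 0%MM m.
Proof. by case: Hle => _ [_ H]. Qed.
Lemma tle_div a b : (a <= b)%MM -> le a b.
Proof.
move=> h; rewrite -(submK h) -{1}[a]add0m; apply: tle_addr; apply: tle0.
Qed.
Lemma tle_totalP a b : ~~ le a b -> le b a.
Proof. by have := tle_total a b; case: (le a b). Qed.

Definition Fmax (s : seq 'X_{1..n}) :=
  foldr (fun m acc => if le acc m then m else acc) 0%MM s.

Lemma Fmax_max s y : y \in s -> le y (Fmax s).
Proof.
elim: s => [//|x s IH]; rewrite inE /= => /orP[/eqP->|ys].
  by case: ifP => [_|/negbT h]; [apply: tle_refl|apply: tle_totalP].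
by case: ifP => [h|_]; [apply: tle_trans (IH ys) h| apply: IH].
Qed.

Lemma Fmax_in s : Fmax s = 0%MM \/ Fmax s \in s.
Proof.
elim: s => [|x s IH] /=; first by left.
case: ifP => _; first by right; rewrite inE eqxx.
by case: IH => [->|h]; [left|right; rewrite inE h orbT].
Qed.

Lemma Fmax_mem s : s != [::] -> Fmax s \in s.
Proof.
case: (Fmax_in s) => // h; case: s h => [//|x s] h _.
have : le x (Fmax (x :: s)) by apply: Fmax_max; rewrite inE eqxx.
rewrite h => h2; have -> : x = 0%MM by apply: tle_anti h2 (tle0 _).
by rewrite -h inE eqxx.
Qed.

Section Poly.
Variable K : fieldType.
Implicit Types p q : {mpoly K[n]}.

Lemma LT_max p m : m \in msupp p -> le m (LT le p).
Proof. exact: Fmax_max. Qed.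

Lemma LT_in p : p != 0 -> LT le p \in msupp p.
Proof. by move=> h; apply: Fmax_mem; rewrite msupp_eq0. Qed.

Lemma LT_eq p x : x \in msupp p -> (forall y, y \in msupp p -> le y x) ->
  LT le p = x.
Proof.
move=> xp h; have p0 : p != 0 by apply/negP => /eqP p0; rewrite p0 msupp0 in xp.
by apply: tle_anti; [apply: h; apply: LT_in|apply: LT_max].
Qed.

Lemma LC_neq0 p : p != 0 -> LC le p != 0.
Proof. by move=> /LT_in; rewrite mcoeff_msupp. Qed.

Lemma coef_gt_LT p m : le (LT le p) m -> m != LT le p -> p@_m = 0.
Proof.
move=> h1 h2; apply/eqP; rewrite mcoeff_eq0; apply/negP => /LT_max h3.
by case/eqP: h2; apply: tle_anti.
Qed.

Lemma msuppZ_eq (c : K) p m : c != 0 -> (m \in msupp (c *: p)) = (m \in msupp p).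
Proof. by move=> c0; rewrite !mcoeff_msupp mcoeffZ mulf_eq0 negb_or c0. Qed.

Lemma LTZ (c : K) p : c != 0 -> LT le (c *: p) = LT le p.
Proof.
move=> c0; have [->|p0] := eqVneq p 0; first by rewrite scaler0.
apply: LT_eq; first by rewrite msuppZ_eq // LT_in.
by move=> y; rewrite msuppZ_eq // => /LT_max.
Qed.

Lemma LCZ (c : K) p : c != 0 -> LC le (c *: p) = c * LC le p.
Proof. by move=> c0; rewrite /LC LTZ // mcoeffZ. Qed.

End Poly.

Definition leD (D : seq 'I_n) (a b : 'X_{1..n}) := all (fun i => a i <= b i)%N D.

Lemma dickson D (S : 'X_{1..n} -> Prop) : exists F : seq 'X_{1..n},
  (forall x, x \in F -> S x) /\ (forall s, S s -> exists2 x, x \in F & leD D x s).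
Proof.
elim: D S => [|i D IH] S.
  case: (classic (exists s, S s)) => [[s Ss]|N].
    by exists [:: s]; split => [x|t _]; [rewrite inE => /eqP->|exists s; rewrite ?inE].
  by exists (@nil 'X_{1..n}); split => // t St; case: N; exists t.
have [FT [FTS FTP]] := IH S.
pose A := (\max_(x <- FT) x i)%N.
have H k : exists G : seq 'X_{1..n}, (forall x, x \in G -> S x) /\
   (forall s, S s -> (s i < k)%N -> exists2 x, x \in G & leD (i :: D) x s).
  elim: k => [|k [G [GS GP]]]; first by exists (@nil 'X_{1..n}).
  have [Fk [FkS FkP]] := IH (fun s => S s /\ s i = k).
  exists (G ++ Fk); split => [x|s Ss].
    by rewrite mem_cat => /orP[/GS|/FkS[]].
  rewrite ltnS leq_eqVlt => /orP[/eqP si|/(GP _ Ss)[x xG xs]]; last first.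
    by exists x => //; rewrite mem_cat xG.
  have [x xF xs] := FkP s (conj Ss si).
  exists x; first by rewrite mem_cat xF orbT.
  by rewrite /= xs andbT; have [_ ->] := FkS x xF; rewrite si.
have [G [GS GP]] := H A.
exists (FT ++ G); split => [x|s Ss]; first by rewrite mem_cat => /orP[/FTS|/GS].
case: (ltnP (s i) A) => [/(GP _ Ss)[x xG xs]|As].
  by exists x => //; rewrite mem_cat xG orbT.
have [x xF xs] := FTP s Ss.
exists x; first by rewrite mem_cat xF.
rewrite /= xs andbT; apply: leq_trans As.
by have := @leq_bigmax_seq _ FT xpredT (fun x : 'X_{1..n} => x i) x xF isT.
Qed.

Lemma leD_lem a b : leD (enum 'I_n) a b = (a <= b)%MM.
Proof.
apply/allP/mnm_lepP => h i; first by apply: h; rewrite mem_enum.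
by move=> _; apply: h.
Qed.

Lemma dicksonM (S : 'X_{1..n} -> Prop) : exists F : seq 'X_{1..n},
  (forall x, x \in F -> S x) /\ (forall s, S s -> exists2 x, x \in F & (x <= s)%MM).
Proof.
have [F [FS FP]] := dickson (enum 'I_n) S; exists F; split => // s /FP[x xF xs].
by exists x; rewrite // -leD_lem.
Qed.

Lemma seq_min (s : seq 'X_{1..n}) : s != [::] ->
  exists2 x, x \in s & forall y, y \in s -> le x y.
Proof.
elim: s => [//|a s IH] _; case: (eqVneq s [::]) => [->|/IH [x xs xm]].
  by exists a; rewrite ?inE // => y /[!inE] /eqP->; apply: tle_refl.
case: (boolP (le a x)) => h.
  exists a; first by rewrite inE eqxx.
  move=> y /[!inE] /orP[/eqP->|/xm]; [apply: tle_refl|exact: tle_trans].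
exists x; first by rewrite inE xs orbT.
move=> y /[!inE] /orP[/eqP->|/xm //]; exact: tle_totalP.
Qed.

Lemma le_min (S : 'X_{1..n} -> Prop) : (exists s, S s) ->
  exists2 x, S x & forall y, S y -> le x y.
Proof.
move=> [s Ss]; have [F [FS FP]] := dicksonM S.
have [y yF ys] := FP s Ss.
have [|x xF xm] := @seq_min F; first by apply/negP => /eqP F0; rewrite F0 in yF.
exists x; first exact: FS.
move=> t /FP [w wF wt]; apply: tle_trans (xm _ wF) (tle_div wt).
Qed.

Definition tlt a b := le a b && (a != b).

Lemma tlt_wf : well_founded tlt.
Proof.
move=> x; apply: NNPP => N.
have [y0 Sy0 ym] := @le_min (fun y => ~ Acc tlt y) (ex_intro _ x N).
apply: Sy0; constructor => y /andP[h1 h2]; apply: NNPP => Ny.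
by case/eqP: h2; apply: tle_anti h1 (ym _ Ny).
Qed.

End Ord.
Section Elim.
Variables (n : nat) (le : rel 'X_{1..n}).
Hypothesis Hle : term_ordering le.
Variable K : fieldType.
Variables (bad : pred 'X_{1..n}) (E : 'X_{1..n} -> {mpoly K[n]})
  (Q : {mpoly K[n]} -> Prop).
Hypothesis HE1 : forall m, bad m -> (E m)@_m = 1.
Hypothesis HE2 : forall m m', bad m -> m' \in msupp (E m) -> le m' m.
Hypothesis HQ : forall p m, Q p -> m \in msupp p -> bad m -> Q (p - p@_m *: E m).

Let G p := exists r, Q r /\ (forall m, m \in msupp r -> ~~ bad m) /\
  (forall m, (forall m', m' \in msupp p -> bad m' -> tlt le m' m) -> r@_m = p@_m).

Lemma tlt_le_trans a b c : tlt le a b -> le b c -> tlt le a c.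
Proof.
case/andP=> h1 h2 h3; rewrite /tlt (tle_trans Hle h1 h3); apply/negP=> /eqP E1.
subst c. by case/eqP: h2; apply: (tle_anti Hle h1 h3).
Qed.

Lemma G_nobad p : Q p -> (forall m, m \in msupp p -> ~~ bad m) -> G p.
Proof. by move=> Qp h; exists p. Qed.

Lemma mem_filter1 (T : eqType) (a : pred T) s x : x \in filter a s -> a x && (x \in s).
Proof. by rewrite mem_filter. Qed.

Lemma mem_filter2 (T : eqType) (a : pred T) s x : a x -> x \in s -> x \in filter a s.
Proof. by rewrite mem_filter => -> ->. Qed.

Lemma G_max p : Q p -> ~~ has bad (msupp p) \/
  exists m1, [/\ m1 \in msupp p, bad m1 & forall m', m' \in msupp p -> bad m' -> le m' m1].
Proof.
move=> _; case: (boolP (has bad (msupp p))) => h; [right|by left].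
have ne : [seq x <- msupp p | bad x] != [::].
  by rewrite -has_filter.
have /mem_filter1 /andP[b1 i1] := Fmax_mem Hle ne.
exists (Fmax le [seq x <- msupp p | bad x]); split => // m' m'p bm'.
by apply: (Fmax_max Hle); apply: mem_filter2.
Qed.

Lemma G_aux m1 : forall p, Q p -> m1 \in msupp p -> bad m1 ->
  (forall m', m' \in msupp p -> bad m' -> le m' m1) -> G p.
Proof.
elim/(well_founded_induction (tlt_wf Hle)): m1 => m1 IH p Qp m1p bm1 mx.
set p' := p - p@_m1 *: E m1.
have Qp' : Q p' by apply: HQ.
have key : forall m', m' \in msupp p' -> bad m' -> tlt le m' m1.
  move=> m' /[!mcoeff_msupp] h bm'; move: h.
  rewrite /p' mcoeffB mcoeffZ.
  case: (eqVneq m' m1) => [->|ne]; first by rewrite HE1 // mulr1 subrr eqxx.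
  rewrite /tlt ne andbT.
  case: (eqVneq ((E m1)@_m') 0) => [->|nz _].
    rewrite mulr0 subr0 -mcoeff_msupp => h; exact: mx.
  by apply: HE2 bm1 _; rewrite mcoeff_msupp.
have Gp' : G p'.
  case: (G_max Qp') => [nb|[m2 [m2p bm2 mx2]]].
    apply: G_nobad => // m mp; apply/negP => bm; move/hasP: nb; apply.
    by exists m.
  by apply: (IH m2 (key _ m2p bm2) p').
case: Gp' => r [Qr [nbr hr]]; exists r; split; [done|split; [done|move=> m hm]].
rewrite hr; last first.
  move=> m' m'p bm'; apply: tlt_le_trans (key _ m'p bm') _.
  by case/andP: (hm _ m1p bm1).
rewrite /p' mcoeffB mcoeffZ.
case: (eqVneq ((E m1)@_m) 0) => [->|nz]; first by rewrite mulr0 subr0.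
have : le m m1 by apply: HE2 bm1 _; rewrite mcoeff_msupp.
case/andP: (hm _ m1p bm1) => h1 h2 h3.
by case/eqP: h2; apply: (tle_anti Hle h1 h3).
Qed.

Lemma elim_bad p : Q p -> G p.
Proof.
move=> Qp; case: (G_max Qp) => [nb|[m1 [m1p bm1 mx]]].
  apply: G_nobad => // m mp; apply/negP => bm; move/hasP: nb; apply.
  by exists m.
exact: (G_aux Qp m1p bm1 mx).
Qed.

End Elim.
Lemma pairs_exist (A B : eqType) (R : A -> B -> Prop) (L : seq A) :
  (forall t, t \in L -> exists g, R t g) ->
  exists gs : seq (A * B), map fst gs = L /\ (forall x, x \in gs -> R x.1 x.2).
Proof.
elim: L => [|t L IH] H; first by exists [::].
have [g Rg] := H t (mem_head _ _).
have [gs [h1 h2]] := IH (fun u hu => H u (mem_behead (s := t :: L) hu)).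
exists ((t, g) :: gs); split; first by rewrite /= h1.
by move=> x /[!inE] /orP[/eqP->|/h2].
Qed.

Lemma uniq_map_inj (T1 T2 : eqType) (f : T1 -> T2) s x y :
  uniq (map f s) -> x \in s -> y \in s -> f x = f y -> x = y.
Proof.
elim: s => [//|a s IH] /= /andP[na us].
rewrite !inE => /orP[/eqP->|xs] /orP[/eqP->|ys] // e.
- by case/negP: na; rewrite e map_f.
- by case/negP: na; rewrite -e map_f.
- exact: IH.
Qed.

Section RGB.
Variables (n : nat) (le : rel 'X_{1..n}).
Hypothesis Hle : term_ordering le.
Variable K : fieldType.
Variable J : {mpoly K[n]} -> Prop.
Hypothesis HJsub : forall p q, J p -> J q -> J (p - q).
Hypothesis HJZ : forall c p, J p -> J (c *: p).
Hypothesis HJX : forall p g m, J p -> J g -> m \in msupp p -> (LT le g <= m)%MM ->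
  J ('X_[m - LT le g] * g).

Lemma mcoeff_shift (h : {mpoly K[n]}) t m : (t <= m)%MM ->
  ('X_[m - t] * h)@_m = h@_t.
Proof. by move=> tm; rewrite mulrC -[X in mcoeff X _](submK tm) mcoeffMX. Qed.

Lemma msupp_shift (h : {mpoly K[n]}) u m' : m' \in msupp ('X_[u] * h) ->
  exists2 k, k \in msupp h & m' = (u + k)%MM.
Proof.
rewrite mulrC (perm_mem (msuppMX h u)) => /mapP [k kh ->]; by exists k.
Qed.

Lemma LT_char (r : {mpoly K[n]}) t : r@_t != 0 ->
  (forall m, tlt le t m -> r@_m = 0) -> LT le r = t.
Proof.
move=> rt hm; apply: (LT_eq Hle); first by rewrite mcoeff_msupp.
move=> y; rewrite mcoeff_msupp => ry; case: (boolP (le y t)) => // nh.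
have h := tle_totalP Hle nh.
case: (eqVneq y t) => [e|ne]; first by rewrite e (tle_refl Hle) in nh.
by rewrite hm ?eqxx // in ry; rewrite /tlt h eq_sym ne.
Qed.

Let S t := exists p, J p /\ p != 0 /\ LT le p = t.

Lemma S_monic t : S t -> exists h, J h /\ LT le h = t /\ LC le h = 1.
Proof.
case=> p [Jp [p0 <-]]; exists ((LC le p)^-1 *: p); split; first exact: HJZ.
have c0 : (LC le p)^-1 != 0 by rewrite invr_eq0 (LC_neq0 Hle).
by rewrite (LTZ Hle _ c0) (LCZ Hle _ c0) mulVf // (LC_neq0 Hle).
Qed.

Lemma reduce_one (hs : seq ('X_{1..n} * {mpoly K[n]})) t h :
  (forall x, x \in hs -> J x.2 /\ LT le x.2 = x.1 /\ LC le x.2 = 1) ->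
  J h -> LT le h = t -> LC le h = 1 ->
  exists g, [/\ J g, LT le g = t, LC le g = 1 &
    forall m, m \in msupp g -> m != t -> forall x, x \in hs -> ~~ (x.1 <= m)%MM].
Proof.
move=> Hhs Jh LTh LCh.
pose bad m := (m != t) && has (fun x => (x.1 <= m)%MM) hs.
pose sel m := nth (0%MM, 0) hs (find (fun x => (x.1 <= m)%MM) hs).
pose E m := 'X_[m - (sel m).1] * (sel m).2.
have selP m : bad m -> sel m \in hs /\ ((sel m).1 <= m)%MM.
  case/andP=> _ hh; split; first by apply: mem_nth; rewrite -has_find.
  exact: (nth_find (0%MM, 0) hh).
have HE1 m : bad m -> (E m)@_m = 1.
  move=> /selP [s1 s2]; rewrite /E mcoeff_shift //.
  by have [_ [<- <-]] := Hhs _ s1.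
have HE2 m m' : bad m -> m' \in msupp (E m) -> le m' m.
  move=> /selP [s1 s2] /msupp_shift [k kh ->].
  have [_ [e _]] := Hhs _ s1.
  rewrite -[X in le _ X](submK s2); apply: (tle_addl Hle).
  by rewrite -e; apply: (LT_max Hle).
have HQ p m : J p -> m \in msupp p -> bad m -> J (p - p@_m *: E m).
  move=> Jp mp bm; apply: (HJsub Jp); apply: HJZ.
  have [s1 s2] := selP _ bm; have [J2 [e _]] := Hhs _ s1.
  by rewrite /E -e; apply: (HJX Jp J2 mp); rewrite e.
have [r [Jr [nbr hr]]] := elim_bad Hle HE1 HE2 HQ Jh.
have h0 : h != 0 by apply/negP=> /eqP h0; move: LCh; rewrite h0 /LC mcoeff0 => /eqP; rewrite eq_sym oner_eq0.
have badlt m' : m' \in msupp h -> bad m' -> tlt le m' t.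
  move=> m'h /andP[ne _]; rewrite /tlt ne andbT -LTh; exact: (LT_max Hle).
have rt : r@_t = 1 by rewrite hr // -LTh.
have LTr : LT le r = t.
  apply: LT_char; first by rewrite rt oner_eq0.
  move=> m tm; rewrite hr; last by move=> m' m'h bm'; apply: (tlt_le_trans Hle (badlt _ m'h bm')); case/andP: tm.
  by case/andP: tm => h1 h2; apply: (coef_gt_LT Hle); rewrite LTh // eq_sym.
exists r; split => //; first by rewrite /LC LTr.
move=> m mr ne x xh; have := nbr m mr; rewrite /bad ne /=.
by apply: contra => hx; apply/hasP; exists x.
Qed.

Lemma exists_rGB : exists gs, is_reduced_GB le J gs.
Proof.
have [F [FS FP]] := dicksonM S.
pose minimal (t : 'X_{1..n}) := all (fun t' => (t' <= t)%MM ==> (t' == t)) F.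
pose F' := filter minimal (undup F).
have F'F t : t \in F' -> t \in F /\ minimal t.
  by rewrite mem_filter mem_undup => /andP[].
have gen s : S s -> exists2 t, t \in F' & (t <= s)%MM.
  move=> Ss; pose D := filter (fun t => (t <= s)%MM) F.
  have [y yF ys] := FP s Ss.
  have [|x xD xm] := seq_min Hle (s := D).
    apply/negP => /eqP D0; have yD : y \in D by rewrite mem_filter ys yF.
    by rewrite D0 in yD.
  move: xD; rewrite mem_filter => /andP[xs xF]; exists x => //.
  rewrite mem_filter mem_undup xF andbT; apply/allP => t' t'F; apply/implyP => t'x.
  apply/eqP; apply: (tle_anti Hle (tle_div Hle t'x)); apply: xm.
  by rewrite mem_filter t'F (lepm_trans t'x xs).
have [hs [hs1 hs2]] := @pairs_exist _ _
   (fun t h => J h /\ LT le h = t /\ LC le h = 1) F'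
   (fun t ht => S_monic (FS t (proj1 (F'F t ht)))).
have Hhs x : x \in hs -> J x.2 /\ LT le x.2 = x.1 /\ LC le x.2 = 1.
  exact: hs2.
pose good t g := [/\ J g, LT le g = t, LC le g = 1 &
    forall m, m \in msupp g -> m != t -> forall x, x \in hs -> ~~ (x.1 <= m)%MM].
have Hgood : forall t, t \in F' -> exists g, good t g.
  move=> t tF.
  have : t \in map fst hs by rewrite hs1.
  case/mapP => x xh ->; have [J1 [e1 e2]] := Hhs x xh.
  exact: reduce_one Hhs J1 e1 e2.
have [gs [gs1 gs2]] := @pairs_exist _ _ good F' Hgood.
have Hgs x : x \in gs -> good x.1 x.2 by apply: gs2.
have uF' : uniq F' by rewrite filter_uniq // undup_uniq.
have mapLT : map (LT le) (map snd gs) = F'.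
  rewrite -gs1 -map_comp; apply/eq_in_map => x /Hgs [_ e _ _]; exact: e.
exists (map snd gs); split.
- split.
    move=> g /mapP [x xg ->]; have [Jg LTg LCg _] := Hgs x xg; split => //.
    by apply/negP=> /eqP g0; move: LCg; rewrite g0 /LC mcoeff0 => /eqP; rewrite eq_sym oner_eq0.
  move=> p Jp p0; have [t tF tp] := gen _ (ex_intro _ p (conj Jp (conj p0 erefl))).
  have : t \in map fst gs by rewrite gs1.
  case/mapP => x xg e; exists x.2; first exact: map_f.
  by have [_ -> _ _] := Hgs x xg; rewrite -e.
- by apply: (map_uniq (f := LT le)); rewrite mapLT.
- by move=> g /mapP [x xg ->]; have [] := Hgs x xg.
- move=> g g' /mapP [x xg ->] /mapP [x' x'g ->] ne m mg.
  have [_ e1 _ red] := Hgs x xg; have [_ e2 _ _] := Hgs x' x'g.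
  case: (eqVneq m x.1) => [mt|mt]; last first.
    have : x'.1 \in map fst hs by rewrite hs1 -gs1 map_f.
    case/mapP => y yh ey; rewrite e2 ey; exact: red mg mt y yh.
  rewrite e2 mt; apply/negP => h.
  have x1F : x.1 \in F' by rewrite -gs1 map_f.
  have x'1F : x'.1 \in F' by rewrite -gs1 map_f.
  have [_ /allP mx] := F'F _ x1F; have [x'F _] := F'F _ x'1F.
  have /eqP e := implyP (mx _ x'F) h.
  case/eqP: ne; apply: (uniq_map_inj (f := LT le) (s := map snd gs)).
  + by rewrite mapLT.
  + exact: map_f.
  + exact: map_f.
  + by rewrite e1 e2 e.
Qed.

End RGB.
Section Main.
Variables (K : fieldType) (n s : nat) (f : 'I_s -> {mpoly K[n]}) (z : 'I_s -> 'I_n).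
Hypothesis zinj : injective z.
Local Notation P := {mpoly K[n]}.
Local Notation mon := 'X_{1..n}.

Lemma ig0 : ideal_gen f 0.
Proof. by exists (fun _ => 0); rewrite big1 // => i _; rewrite mul0r. Qed.

Lemma igD a b : ideal_gen f a -> ideal_gen f b -> ideal_gen f (a + b).
Proof.
move=> [ha ->] [hb ->]; exists (fun i => ha i + hb i).
by rewrite -big_split; apply: eq_bigr => i _; rewrite mulrDl.
Qed.

Lemma igM c a : ideal_gen f a -> ideal_gen f (c * a).
Proof.
move=> [ha ->]; exists (fun i => c * ha i).
by rewrite mulr_sumr; apply: eq_bigr => i _; rewrite mulrA.
Qed.

Lemma igZ (c : K) a : ideal_gen f a -> ideal_gen f (c *: a).
Proof. by rewrite -mul_mpolyC; apply: igM. Qed.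

Lemma igN a : ideal_gen f a -> ideal_gen f (- a).
Proof. by move=> h; rewrite -scaleN1r; apply: igZ. Qed.

Lemma igB a b : ideal_gen f a -> ideal_gen f b -> ideal_gen f (a - b).
Proof. by move=> ha hb; apply: igD => //; apply: igN. Qed.

Lemma igf i : ideal_gen f (f i).
Proof.
exists (fun j => (j == i)%:R); rewrite (bigD1 i) //= eqxx mul1r big1 ?addr0 //.
by move=> j /negbTE ->; rewrite mul0r.
Qed.

Lemma ig_ideal : is_ideal (ideal_gen f).
Proof. by split; [exact: ig0|exact: igD|move=> h g; exact: igM]. Qed.

Lemma ig_sub (I : P -> Prop) : is_ideal I -> (forall i, I (f i)) ->
  forall p, ideal_gen f p -> I p.
Proof.
case=> I0 ID IM If p [h ->]; apply: (big_ind I) => // i _; exact: IM.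
Qed.

Lemma ig_proper : (forall i, in_M (f i)) -> ~ ideal_gen f 1.
Proof.
move=> HM [h e]; have := congr1 (mcoeff 0%MM) e.
rewrite mcoeff1 eqxx raddf_sum /= big1 => [/eqP|i _]; first by rewrite oner_eq0.
have [hM _] := @mcoeff0_is_multiplicative n K.
by rewrite hM (HM i) mulr0.
Qed.

Lemma LinE (g : P) m : (Lin g)@_m = \sum_(i < n) g@_(U_(i))%MM * (U_(i)%MM == m)%:R.
Proof. by rewrite /Lin raddf_sum; apply: eq_bigr => i _ /=; rewrite mcoeffZ mcoeffX. Qed.

Lemma LinU (g : P) k : (Lin g)@_(U_(k))%MM = g@_(U_(k))%MM.
Proof.
rewrite LinE (bigD1 k) //= eqxx mulr1 big1 ?addr0 // => i ik.
by rewrite eq_mnm1 (negbTE ik) mulr0.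
Qed.

Lemma indets_Lin (g : P) k : indets (Lin g) k -> g@_(U_(k))%MM != 0.
Proof.
case=> m; rewrite mcoeff_msupp LinE => nz mk.
have [i iU] : exists i : 'I_n, U_(i)%MM = m.
  apply: NNPP => N; case/eqP: nz; apply: big1 => i _.
  case: eqP => [e|_]; [by case: N; exists i|by rewrite mulr0].
by move: mk nz; rewrite -iU mnm1E; case: eqP => // -> _; rewrite -LinE LinU.
Qed.

Lemma indets_msupp (g : P) k : ~ indets g k -> forall m, m \in msupp g -> m k = 0%N.
Proof.
move=> N m mg; apply/eqP; rewrite -leqn0 leqNgt; apply/negP => h.
by apply: N; exists m.
Qed.

Lemma tailE (g : P) k m : (ztail k g)@_m = (U_(k)%MM == m)%:R - (g@_(U_(k))%MM)^-1 * g@_m.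
Proof. by rewrite /ztail mcoeffB mcoeffX mcoeffZ. Qed.

Section SepFacts.
Hypothesis Ha : coherently_separating z f.
Let c i := (f i)@_(U_(z i))%MM.

Lemma c_neq0 i : c i != 0.
Proof. by have [[_ h _] _] := Ha i; apply: indets_Lin. Qed.

Lemma f_other i m : m \in msupp (f i) -> m != U_(z i)%MM -> forall j, m (z j) = 0%N.
Proof.
move=> mf mU j; case: (eqVneq j i) => [->|ji].
  have [[_ _ N] _] := Ha i; apply: (indets_msupp N).
  have Um : (U_(z i)%MM == m) = false by rewrite eq_sym (negbTE mU).
  rewrite mcoeff_msupp tailE Um sub0r oppr_eq0 mulf_eq0 invr_eq0.
  by rewrite negb_or (c_neq0 i) -mcoeff_msupp.
have [_ h] := Ha j; have ij : i != j by rewrite eq_sym.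
exact: (indets_msupp (h i ij) mf).
Qed.

Lemma tail_Phat i : in_Phat z (ztail (z i) (f i)).
Proof.
move=> j; case: (eqVneq j i) => [->|ji]; first by have [[_ _ N] _] := Ha i.
have ij : (i == j) = false by rewrite eq_sym (negbTE ji).
case=> m; rewrite mcoeff_msupp tailE; case: (eqVneq (U_(z i))%MM m) => [<-|ne].
  by rewrite mnm1E (inj_eq zinj) ij.
rewrite sub0r oppr_eq0 mulf_eq0 negb_or -mcoeff_msupp => /andP[_ mf].
by rewrite (f_other mf) // eq_sym.
Qed.

Lemma f_decomp i : f i = c i *: ('X_(z i) - ztail (z i) (f i)).
Proof.
by rewrite /ztail opprB addrC subrK scalerA mulfV ?scale1r // c_neq0.
Qed.

Definition lqf (k : 'I_n) : P :=
  if [pick j | z j == k] is Some j then ztail (z j) (f j) else 'X_k.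
Definition lq := [tuple lqf k | k < n].

Lemma lqf_z i : lqf (z i) = ztail (z i) (f i).
Proof.
rewrite /lqf; case: pickP => [j /eqP /zinj -> //|/(_ i)]; by rewrite eqxx.
Qed.

Lemma phi_Phat p : in_Phat z p -> comp_mpoly lq p = p.
Proof.
move=> hp; rewrite comp_mpolyEX [RHS]mpolyE; apply: eq_big_seq => m mp.
congr (_ *: _); rewrite comp_mpolyX mpolyXE_id; apply: eq_bigr => k _.
rewrite tnth_mktuple /lqf; case: pickP => // j /eqP <-.
by rewrite (indets_msupp (hp j) mp) !expr0.
Qed.

Lemma phi_f i : comp_mpoly lq (f i) = 0.
Proof.
rewrite f_decomp comp_mpolyZ comp_mpolyB (phi_Phat (@tail_Phat i)).
by rewrite comp_mpolyXU -tnth_nth tnth_mktuple lqf_z subrr scaler0.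
Qed.

Lemma ig_Phat r : ideal_gen f r -> in_Phat z r -> r = 0.
Proof.
move=> [h e] hr; rewrite -(phi_Phat hr) e raddf_sum big1 // => i _.
have [hM _] := comp_mpoly_is_multiplicative lq.
by rewrite /= hM phi_f mulr0.
Qed.

Definition zd (m : mon) := (\sum_(i < s) m (z i))%N.
Lemma zdD a b : zd (a + b)%MM = (zd a + zd b)%N.
Proof. by rewrite /zd -big_split; apply: eq_bigr => i _; rewrite mnmDE. Qed.
Lemma zd0 : zd 0%MM = 0%N.
Proof. by rewrite /zd big1 // => i _; rewrite mnm0E. Qed.
Lemma zdU i : zd U_(z i)%MM = 1%N.
Proof.
rewrite /zd (bigD1 i) //= mnm1E eqxx big1 // => j ji.
by rewrite mnm1E (inj_eq zinj) eq_sym (negbTE ji).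
Qed.

Definition ole (a b : mon) := (zd a < zd b)%N || ((zd a == zd b) && (a <= b)%O).

Lemma ole_to : term_ordering ole.
Proof.
split; [split|split].
- by move=> m; rewrite /ole eqxx lexx orbT.
- move=> a b /andP[]; rewrite /ole; case: (ltngtP (zd a) (zd b)) => //= _ h1 h2.
  by apply: le_anti; rewrite h1 h2.
- move=> b a w; rewrite /ole => /orP[ab|/andP[/eqP eab ab]] /orP[bw|/andP[/eqP ebw bw]].
  + by rewrite (ltn_trans ab bw).
  + by rewrite -ebw ab.
  + by rewrite eab bw.
  + by rewrite eab ebw eqxx (le_trans ab bw) orbT.
- move=> a b; rewrite /ole; case: (ltngtP (zd a) (zd b)) => //= _; exact: le_total.
- move=> a b m; rewrite /ole !zdD ltn_add2r eqn_add2r lemc_add2l //.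
- move=> m; rewrite /ole zd0 le0x andbT; by case: (zd m).
Qed.

Lemma ole_LT i : LT ole (f i) = U_(z i)%MM.
Proof.
apply: (LT_eq ole_to); first by rewrite mcoeff_msupp c_neq0.
move=> y yf; case: (eqVneq y U_(z i)%MM) => [->|ne].
  by rewrite /ole eqxx lexx orbT.
rewrite /ole zdU; apply/orP; left; rewrite /zd big1 // => j _; exact: (f_other yf ne).
Qed.

End SepFacts.
End Main.
Section Main2.
Variables (K : fieldType) (n s : nat) (f : 'I_s -> {mpoly K[n]}) (z : 'I_s -> 'I_n).
Hypothesis zinj : injective z.
Local Notation P := {mpoly K[n]}.
Local Notation mon := 'X_{1..n}.

Definition zt (m : mon) := [exists i, (0 < m (z i))%N].

Lemma ztP m : zt m -> exists i, (U_(z i) <= m)%MM.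
Proof. by case/existsP => i h; exists i; rewrite lep1mP -lt0n. Qed.

Section WithLe.
Variable le : rel mon.
Hypothesis Hle : term_ordering le.
Hypothesis HLT : forall i, LT le (f i) = U_(z i)%MM.
Hypothesis Hf0 : forall i, f i != 0.

Lemma LCf i : LC le (f i) = (f i)@_(U_(z i))%MM.
Proof. by rewrite /LC HLT. Qed.

Lemma reduce p : exists r, ideal_gen f (p - r) /\ in_Phat z r /\
  (forall m, (forall m', m' \in msupp p -> zt m' -> tlt le m' m) -> r@_m = p@_m).
Proof.
pose E (m : mon) : P := if [pick i | (0 < m (z i))%N] is Some i
  then (LC le (f i))^-1 *: ('X_[m - U_(z i)] * f i) else 0.
have Epick m : zt m -> exists i, (U_(z i) <= m)%MM /\
    E m = (LC le (f i))^-1 *: ('X_[m - U_(z i)] * f i).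
  move=> hz; rewrite /E; case: pickP => [i hi|h].
    by exists i; split => //; rewrite lep1mP -lt0n.
  by exfalso; case/existsP: hz => j hj; move: (h j); rewrite hj.
have HE1 m : zt m -> (E m)@_m = 1.
  case/Epick => i [Um ->]; rewrite mcoeffZ mcoeff_shift // -LCf mulVf //.
  exact: (LC_neq0 Hle).
have HE2 m m' : zt m -> m' \in msupp (E m) -> le m' m.
  case/Epick => i [Um ->] /msuppZ_le /msupp_shift [k kf ->].
  rewrite -[X in le _ X](submK Um); apply: (tle_addl Hle).
  by rewrite -HLT; apply: (LT_max Hle).
have HQ r m : ideal_gen f (p - r) -> m \in msupp r -> zt m ->
    ideal_gen f (p - (r - r@_m *: E m)).
  move=> hr _ /Epick [i [_ ->]]; rewrite opprB addrCA addrC.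
  by apply: igD => //; apply: igZ; apply: igZ; apply: igM; apply: igf.
have Q0 : ideal_gen f (p - p) by rewrite subrr; apply: ig0.
have [r [Qr [nbr hr]]] := elim_bad Hle HE1 HE2 HQ Q0.
exists r; split => //; split => // j [m mr mz].
by move: (nbr m mr); rewrite /zt; move/existsP; apply; exists j.
Qed.

Lemma zt_cond (p : P) : p != 0 -> ~~ zt (LT le p) ->
  forall m', m' \in msupp p -> zt m' -> tlt le m' (LT le p).
Proof.
move=> p0 nz m' m'p zm; rewrite /tlt (LT_max Hle m'p) /=.
by apply/negP => /eqP e; rewrite -e zm in nz.
Qed.

Lemma LT_zterm (Ha : coherently_separating z f) (p : P) :
  ideal_gen f p -> p != 0 -> zt (LT le p).
Proof.
move=> ip p0; apply: contraT => nz.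
have [r [ipr [Pr hr]]] := reduce p.
have r0 : r = 0.
  apply: (ig_Phat zinj Ha) => //.
  by have := igB ip ipr; rewrite opprB addrCA subrr addr0.
have := hr _ (zt_cond p0 nz); rewrite r0 mcoeff0 => /esym /eqP.
by rewrite mcoeff_eq0 (LT_in Hle p0).
Qed.

Lemma LT_I (I : P -> Prop) : is_ideal I -> (forall i, I (f i)) ->
  forall p, I p -> p != 0 -> ~~ zt (LT le p) ->
  exists r, [/\ I r, in_Phat z r, r != 0 & LT le r = LT le p].
Proof.
move=> II If p Ip p0 nz.
have [r [ipr [Pr hr]]] := reduce p.
have Ir : I r.
  have : I (p - (p - r)).
    have [_ ID IM] := II; apply: ID => //.
    rewrite -scaleN1r -mul_mpolyC; apply: IM; exact: (ig_sub II If ipr).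
  by rewrite opprB addrCA subrr addr0.
have rT : r@_(LT le p) = p@_(LT le p) by apply: hr; apply: zt_cond.
have LTr : LT le r = LT le p.
  apply: (LT_char Hle).
    by rewrite rT -mcoeff_msupp; apply: (LT_in Hle p0).
  move=> m /andP[h1 h2]; rewrite hr.
    by apply: (coef_gt_LT Hle) => //; rewrite eq_sym.
  move=> m' m'p zm; apply: (tlt_le_trans Hle (zt_cond p0 nz m'p zm)) => //.
exists r; split => //.
by apply/negP => /eqP r0; move: rT; rewrite r0 mcoeff0 => /esym/eqP; rewrite mcoeff_eq0 (LT_in Hle p0).
Qed.

Lemma LTF i : LT le ((LC le (f i))^-1 *: f i) = U_(z i)%MM.
Proof. by rewrite (LTZ Hle) ?invr_eq0 ?(LC_neq0 Hle) ?Hf0 // HLT. Qed.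

End WithLe.
End Main2.
Theorem proposition2p6 (K : fieldType) (n s : nat) (f : 'I_s -> {mpoly K[n]})
  (z : 'I_s -> 'I_n) :
  (1 <= s)%N ->
  (forall i, in_M (f i) /\ f i != 0) ->
  injective z ->
  let LTcond := fun le : rel 'X_{1..n} =>
    term_ordering le /\ (forall i, LT le (f i) = U_(z i)%MM) in
  let fs := fun le : rel 'X_{1..n} =>
    [seq (LC le (f i))^-1 *: f i | i <- enum 'I_s] in
  let a := coherently_separating z f in
  let b := (exists le, LTcond le) /\
    (forall le, LTcond le -> is_reduced_GB le (ideal_gen f) (fs le)) in
  let c := (exists le, LTcond le) /\
    (forall (I : {mpoly K[n]} -> Prop) le,
       is_proper_ideal I -> (forall i, I (f i)) -> LTcond le ->
       is_reduced_GB le (ideal_gen f) (fs le) /\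
       exists gs : seq {mpoly K[n]},
         is_reduced_GB le (restrict_Phat z I) gs /\ is_GB le I (fs le ++ gs)) in
  (a <-> b) /\ (b <-> c).
Proof.
move=> s1 Hf zinj LTcond fs a b c.
have Hf0 i : f i != 0 := (Hf i).2.
have HM i : in_M (f i) := (Hf i).1.
have fsP le g : g \in fs le -> exists i, g = (LC le (f i))^-1 *: f i.
  by case/mapP => i _ ->; exists i.
have fsI le i : (LC le (f i))^-1 *: f i \in fs le by apply: map_f; rewrite mem_enum.
have red : a -> forall le, LTcond le -> is_reduced_GB le (ideal_gen f) (fs le).
  move=> Ha le [Hle HLT].
  have ci i : LC le (f i) != 0 := LC_neq0 Hle (Hf0 i).
  split.
  - split.
    + move=> g /fsP [i ->]; split; first by apply: igZ; apply: igf.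
      by rewrite scaler_eq0 negb_or invr_eq0 ci Hf0.
    + move=> p ip p0; have /ztP [i hi] := LT_zterm zinj Hle HLT Hf0 Ha ip p0.
      by exists ((LC le (f i))^-1 *: f i); rewrite ?fsI // (LTF Hle HLT Hf0).
  - rewrite map_inj_uniq ?enum_uniq // => i j e.
    by apply: zinj; apply/eqP; rewrite -eq_mnm1 -(LTF Hle HLT Hf0) e (LTF Hle HLT Hf0).
  - by move=> g /fsP [i ->]; rewrite (LCZ Hle) ?invr_eq0 // mulVf.
  - move=> g g' /fsP [i ->] /fsP [j ->] ne m.
    rewrite (msuppZ_eq _ _ (c := (LC le (f i))^-1)) ?invr_eq0 // => mf.
    rewrite (LTF Hle HLT Hf0) lep1mP -lt0n; apply/negP => h.
    have ij : i != j by apply: contraNneq ne => ->.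
    have [_ N] := Ha j; exact: (N i ij (ex_intro2 _ _ m mf h)).
have ab : a -> b.
  move=> Ha; split; last exact: red Ha.
  by exists (ole z); split; [exact: ole_to|move=> i; exact: ole_LT].
have ba : b -> a.
  move=> [[le [Hle HLT]] Hb]; have [_ _ _ Hred] := Hb le (conj Hle HLT).
  have ci j : (f j)@_(U_(z j))%MM != 0 by rewrite -(LCf HLT) (LC_neq0 Hle).
  move=> i; split.
  - split.
    + apply/negP => /eqP L0; move: (ci i); by rewrite -LinU L0 mcoeff0 eqxx.
    + exists (U_(z i))%MM; first by rewrite mcoeff_msupp LinU ci.
      by rewrite mnm1E eqxx.
    + case=> m; rewrite mcoeff_msupp tailE; case: (eqVneq (U_(z i))%MM m) => [<-|ne].
        by rewrite mulVf ?ci // subrr eqxx.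
      rewrite sub0r oppr_eq0 mulf_eq0 negb_or => /andP[_ mf] mz.
      case/eqP: ne; apply: (tle_anti Hle).
        by apply: (tle_div Hle); rewrite lep1mP -lt0n.
      by rewrite -(HLT i); apply: (LT_max Hle); rewrite mcoeff_msupp.
  - move=> j ji [m mf mz].
    have ne : (LC le (f i))^-1 *: f i != (LC le (f j))^-1 *: f j.
      apply/negP => /eqP e; move: (congr1 (LT le) e); rewrite !(LTF Hle HLT Hf0).
      by move/eqP; rewrite eq_mnm1 (inj_eq zinj) eq_sym (negbTE ji).
    have mf' : m \in msupp ((LC le (f j))^-1 *: f j).
      by rewrite (msuppZ_eq _ _ (c := (LC le (f j))^-1)) ?invr_eq0 ?(LC_neq0 Hle) ?Hf0.
    have := Hred _ _ (fsI le j) (fsI le i) ne m mf'.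
    by rewrite (LTF Hle HLT Hf0) lep1mP -lt0n mz.
have bc : b -> c.
  move=> hb; have Ha := ba hb; split; first exact: hb.1.
  move=> I le [II I1] If [Hle HLT]; split; first exact: hb.2 le (conj Hle HLT).
  have [I0 ID IM] := II.
  have ISub p q : I p -> I q -> I (p - q).
    by move=> Ip Iq; apply: ID => //; rewrite -mulN1r; apply: IM.
  have HJsub p q : restrict_Phat z I p -> restrict_Phat z I q -> restrict_Phat z I (p - q).
    move=> [Ip Pp] [Iq Pq]; split; first exact: ISub.
    move=> j [m /msuppB_le]; rewrite mem_cat => /orP[mp|mq] mz.
      by apply: (Pp j); exists m.
    by apply: (Pq j); exists m.
  have HJZ (d : K) p : restrict_Phat z I p -> restrict_Phat z I (d *: p).
    move=> [Ip Pp]; split; first by rewrite -mul_mpolyC; apply: IM.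
    by move=> j [m /msuppZ_le mp mz]; apply: (Pp j); exists m.
  have HJX p g m : restrict_Phat z I p -> restrict_Phat z I g -> m \in msupp p ->
      (LT le g <= m)%MM -> restrict_Phat z I ('X_[m - LT le g] * g).
    move=> [Ip Pp] [Ig Pg] mp _; split; first exact: IM.
    move=> j [m' /msupp_shift [k kg ->]]; rewrite mnmDE mnmBE.
    by rewrite (indets_msupp (Pp j) mp) (indets_msupp (Pg j) kg).
  have [gs Hgs] := exists_rGB Hle HJsub HJZ HJX.
  exists gs; split => //.
  have [[GBg GBp] _ _ _] := Hgs.
  split.
  - move=> g; rewrite mem_cat => /orP[/fsP [i ->]|/GBg [[Ig _] g0]] //.
    split; first by rewrite -mul_mpolyC; apply: IM.
    by rewrite scaler_eq0 negb_or invr_eq0 (LC_neq0 Hle) ?Hf0.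
  - move=> p Ip p0; case: (boolP (zt z (LT le p))) => [/ztP [i hi]|nz].
      exists ((LC le (f i))^-1 *: f i); first by rewrite mem_cat fsI.
      by rewrite (LTF Hle HLT Hf0).
    have [r [Ir Pr r0 LTr]] := LT_I Hle HLT Hf0 II If Ip p0 nz.
    have [g gsg hg] := GBp r (conj Ir Pr) r0.
    by exists g; [rewrite mem_cat gsg orbT|rewrite -LTr].
have cb : c -> b.
  move=> [ex hc]; split => // le Hc.
  have PI : is_proper_ideal (ideal_gen f) by split; [exact: ig_ideal|exact: ig_proper].
  by have [] := hc (ideal_gen f) le PI (@igf _ _ _ f) Hc.
by split; split.
Qed.
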